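(* Let $n\ge1$ and $s\ge1$ be integers and let $\mathcal{E}$ be a nonempty subset of $\{1,\dots,s\}$ (the parity-check equation of an $(n,n-1)$ convolutional code), represented by the binary vector $b_1\dots b_s$ with $b_i=1$ iff $i\in\mathcal{E}$. For a finite set $\mathcal{F}$ of integers write $\tilde{\mathcal{G}}^{\mathcal{F}}_2$ for the labelled neighbourhood graph at distance two of $\mathcal{F}$ (defined in the context). Then: (1) if $\mathcal{E}'$ is the set represented by the reversed vector $b_s\dots b_1$ (i.e. $\mathcal{E}'=\{s+1-e: e\in\mathcal{E}\}$), the labelled graphs $\tilde{\mathcal{G}}^{\mathcal{E}'}_2$ and $\tilde{\mathcal{G}}^{\mathcal{E}}_2$ are equivalent; (2) if moreover $s$ is a multiple of $n$, then for every permutation $p$ of $\{1,\dots,n\}$, if $\mathcal{E}'$ is the set represented by the vector $p(b_1\dots b_n)\,p(b_{n+1}\dots b_{2n})\cdots p(b_{s-n+1}\dots b_s)$, obtained by applying the same permutation $p$ to the coordinates inside each consecutive block of length $n$, then $\tilde{\mathcal{G}}^{\mathcal{E}'}_2$ and $\tilde{\mathcal{G}}^{\mathcal{E}}_2$ are equivalent.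
   Context: For a finite set $\mathcal{F}$ of integers and $i\in\mathbb{Z}$ let $\mathcal{F}^{(i)}=\{f+in: f\in\mathcal{F}\}$. The labelled graph of a set $\mathcal{L}$ of such sets has one vertex per element of $\mathcal{L}$, and for two distinct elements $\mathcal{A},\mathcal{B}$ and each position $p\in\mathcal{A}\cap\mathcal{B}$ there is an edge between them labelled $p$. Take $\mathcal{L}=\{\mathcal{F}^{(i)}:i\in\mathbb{Z}\}$; let $V_1$ be the vertices $\mathcal{F}^{(i)}$ with $\mathcal{F}^{(i)}\cap\mathcal{F}\neq\emptyset$ (including $\mathcal{F}$), and let $\tilde{\mathcal{G}}^{\mathcal{F}}_2$ be the labelled subgraph induced by $V_1$ together with all vertices having an edge to a vertex of $V_1$. Two graphs are isomorphic if there is a bijection $\phi$ between their vertex sets such that every pair $(x,y)$ has as many edges between $x,y$ as between $\phi(x),\phi(y)$. Two labelled graphs are equivalent if they are isomorphic via some $\phi$ and there is a bijection $\psi$ from the labels of the first to the labels of the second such that for every pair of vertices $(x,y)$, if the multiset of labels of edges between $x$ and $y$ is $\{a_1,\dots,a_k\}$, then the multiset of labels of edges between $\phi(x)$ and $\phi(y)$ is $\{\psi(a_1),\dots,\psi(a_k)\}$. *)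

(* Defs.v *)
From mathcomp Require Import all_boot all_fingroup all_algebra.
From mathcomp Require Import finmap.
Set Implicit Arguments. Unset Strict Implicit. Unset Printing Implicit Defensive.
Import GRing.Theory Num.Theory.
Local Open Scope fset_scope.
Local Open Scope ring_scope.

(* A labelled graph is given by a vertex predicate V on a type T and, for every
   pair of vertices (x,y), the multiset (as a seq) of labels of the edges
   between x and y. *)

Definition labset (T : Type) (L : eqType) (V : T -> Prop) (m : T -> T -> seq L) (a : L) : Prop :=
  exists x y, V x /\ V y /\ a \in m x y.

Definition bij_on (A B : Type) (P : A -> Prop) (Q : B -> Prop) (f : A -> B) : Prop :=
  (forall x, P x -> Q (f x)) /\
  (forall x y, P x -> P y -> f x = f y -> x = y) /\
  (forall y, Q y -> exists x, P x /\ f x = y).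

Definition lgraph_equiv (T1 T2 : Type) (L1 L2 : eqType)
  (V1 : T1 -> Prop) (m1 : T1 -> T1 -> seq L1)
  (V2 : T2 -> Prop) (m2 : T2 -> T2 -> seq L2) : Prop :=
  exists (phi : T1 -> T2) (psi : L1 -> L2),
    bij_on V1 V2 phi /\
    bij_on (labset V1 m1) (labset V2 m2) psi /\
    (forall x y, V1 x -> V1 y -> size (m1 x y) = size (m2 (phi x) (phi y))) /\
    (forall x y, V1 x -> V1 y -> perm_eq (map psi (m1 x y)) (m2 (phi x) (phi y))).

Definition shiftF (n : nat) (F : {fset int}) (i : int) : {fset int} :=
  [fset f + i * n%:Z | f in F].

Definition inL (n : nat) (F : {fset int}) (A : {fset int}) : Prop :=
  exists i : int, A = shiftF n F i.

Definition edge_labels (A B : {fset int}) : seq int :=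
  if A != B then enum_fset (A `&` B) else [::].

Definition has_edge (A B : {fset int}) : Prop := edge_labels A B <> [::].

Definition V1set (n : nat) (F : {fset int}) (A : {fset int}) : Prop :=
  inL n F A /\ A `&` F != fset0.

Definition G2vert (n : nat) (F : {fset int}) (A : {fset int}) : Prop :=
  inL n F A /\ (V1set n F A \/ exists B, V1set n F B /\ has_edge A B).

Definition G2_equiv (n : nat) (F F' : {fset int}) : Prop :=
  lgraph_equiv (G2vert n F) edge_labels (G2vert n F') edge_labels.

Definition revE (s : nat) (E : {fset int}) : {fset int} :=
  [fset (s.+1)%:Z - e | e in E].

(* apply the permutation p of 'I_n to each block of length n:
   position e = k n + j + 1 (0 <= j < n) goes to k n + p(j) + 1 *)
Definition blockperm_pos (n : nat) (p : {perm 'I_n}) (e : int) : int :=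
  let m := `|e - 1|%N in
  let j := (m %% n)%N in
  let pj := odflt j (omap (fun o : 'I_n => nat_of_ord (p o)) (insub j)) in
  ((m %/ n * n + pj).+1)%:Z.

Definition blockpermE (n : nat) (p : {perm 'I_n}) (E : {fset int}) : {fset int} :=
  [fset blockperm_pos p e | e in E].

(* Main.v *)
Require Import Defs.
From mathcomp Require Import all_boot all_fingroup all_algebra.
From mathcomp Require Import finmap.
From mathcomp Require Import ring zify.
Set Implicit Arguments. Unset Strict Implicit. Unset Printing Implicit Defensive.
Import GRing.Theory Num.Theory.
Local Open Scope fset_scope.
Local Open Scope ring_scope.

Section Transport.
Variables (n : nat) (k h : int -> int) (c : int).
Hypotheses (kK : cancel k h) (hK : cancel h k).
Hypothesis keq : forall x i, k (x + i * n%:Z) = k x + (c * i) * n%:Z.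

Let K (A : {fset int}) : {fset int} := k @` A.

Lemma memK A x : (x \in K A) = (h x \in A).
Proof. by rewrite /K -{1}(hK x) mem_imfset //; apply: can_inj kK. Qed.

Lemma K_inj A B : K A = K B -> A = B.
Proof. move=> e; apply/fsetP=> x; by rewrite -(kK x) -!memK e. Qed.

Lemma KI A B : K (A `&` B) = K A `&` K B.
Proof. by apply/fsetP=> x; rewrite in_fsetI !memK in_fsetI. Qed.

Lemma K0 A : (K A == fset0) = (A == fset0).
Proof.
apply/eqP/eqP=> [e|->]; last by rewrite /K imfset0.
by apply: K_inj; rewrite e /K imfset0.
Qed.

Lemma Kshift F i : K (shiftF n F i) = shiftF n (K F) (c * i).
Proof.
rewrite /K /shiftF -!imfset_comp; apply: eq_imfset => // x /=.
by rewrite keq.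
Qed.

Lemma KinL F A : inL n F A -> inL n (K F) (K A).
Proof. by move=> [i ->]; exists (c * i); rewrite Kshift. Qed.

Lemma Kedge A B : perm_eq (map k (edge_labels A B)) (edge_labels (K A) (K B)).
Proof.
rewrite /edge_labels; case: (eqVneq A B) => [->|nAB]; first by rewrite eqxx.
have -> : K A != K B by apply/eqP => /K_inj; apply/eqP.
apply: uniq_perm; first by rewrite (map_inj_uniq (can_inj kK)) fset_uniq.
  exact: fset_uniq.
move=> x; rewrite -{1}(hK x) (mem_map (can_inj kK)) -KI.
have -> : (x \in enum_fset (K (A `&` B))) = (x \in K (A `&` B)) by [].
by rewrite memK.
Qed.

Lemma Khas A B : has_edge A B -> has_edge (K A) (K B).
Proof.
rewrite /has_edge => H e; apply: H; have := perm_size (Kedge A B).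
by rewrite e size_map; case: (edge_labels A B).
Qed.

Lemma KV1 F A : V1set n F A -> V1set n (K F) (K A).
Proof. by move=> [H1 H2]; split; [exact: KinL | rewrite -KI K0]. Qed.

Lemma KG2 F A : G2vert n F A -> G2vert n (K F) (K A).
Proof.
move=> [H1 [H2|[B [HB HE]]]]; split; first exact: KinL.
  by left; apply: KV1.
  exact: KinL.
by right; exists (K B); split; [apply: KV1 | apply: Khas].
Qed.
End Transport.

Lemma KK (k h : int -> int) (kK : cancel k h) (hK : cancel h k) (A : {fset int}) :
  h @` (k @` A) = A.
Proof. by apply/fsetP=> x; rewrite (memK hK kK) (memK kK hK) kK. Qed.

Lemma G2_transport (n : nat) (k h : int -> int) (c d : int)
  (kK : cancel k h) (hK : cancel h k)
  (keq : forall x i, k (x + i * n%:Z) = k x + (c * i) * n%:Z)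
  (heq : forall x i, h (x + i * n%:Z) = h x + (d * i) * n%:Z)
  (F : {fset int}) : G2_equiv n F (k @` F).
Proof.
exists (fun A => k @` A), k; split; last split; last split.
- split; first by move=> x; apply: KG2.
  split; first by move=> x y _ _; apply: K_inj.
  move=> y Hy; exists (h @` y); split; last exact: KK.
  by have := KG2 hK kK heq Hy; rewrite KK.
- split.
    move=> a [x [y [Hx [Hy Ha]]]]; exists (k @` x), (k @` y).
    split; first exact: KG2.
    split; first exact: KG2.
    by rewrite -(perm_mem (Kedge kK hK x y)) map_f.
  split; first by move=> x y _ _; exact: (can_inj kK).
  move=> b [X [Y [HX [HY Hb]]]].
  have eX := KK hK kK X; have eY := KK hK kK Y.
  move: Hb; rewrite -eX -eY -(perm_mem (Kedge kK hK _ _)) => /mapP [a Ha ->].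
  exists a; split => //; exists (h @` X), (h @` Y); split; last split => //.
    by have := KG2 hK kK heq HX; rewrite KK.
  by have := KG2 hK kK heq HY; rewrite KK.
- by move=> x y _ _; rewrite -(perm_size (Kedge kK hK x y)) size_map.
- by move=> x y _ _; apply: Kedge.
Qed.

Section Block.
Variables (n : nat) (p : {perm 'I_n}).
Hypothesis n0 : (0 < n)%N.

Definition pjf (q : {perm 'I_n}) (j : nat) : nat :=
  odflt j (omap (fun o : 'I_n => nat_of_ord (q o)) (insub j)).

Lemma pjfE q j (Hj : (j < n)%N) : pjf q j = q (Ordinal Hj).
Proof. by rewrite /pjf insubT. Qed.

Lemma pjf_lt q j : (j < n)%N -> (pjf q j < n)%N.
Proof. by move=> Hj; rewrite (pjfE q Hj). Qed.

Lemma pjfK j : (j < n)%N -> pjf p^-1 (pjf p j) = j.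
Proof.
move=> Hj; rewrite (pjfE p Hj) /pjf.
by rewrite (valK (p (Ordinal Hj))) /= permK.
Qed.

Definition gp (q : {perm 'I_n}) (x : int) : int :=
  ((x - 1) %/ n%:Z)%Z * n%:Z + (pjf q `|((x - 1) %% n%:Z)%Z|%N)%:Z + 1.

Lemma n0z : n%:Z != 0. Proof. by rewrite eqz_nat -lt0n. Qed.

Lemma decomp q t : 0 <= t < n%:Z ->
  ((q * n%:Z + t) %/ n%:Z)%Z = q /\ ((q * n%:Z + t) %% n%:Z)%Z = t.
Proof.
move=> /andP [t0 tn]; split.
  by rewrite divzMDl ?n0z // divz_small ?addr0 // t0 /=.
by rewrite modzMDl modz_small // t0.
Qed.

Lemma modz_abs x : `|((x - 1) %% n%:Z)%Z|%N%:Z = ((x - 1) %% n%:Z)%Z.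
Proof. by rewrite gez0_abs // modz_ge0 // n0z. Qed.

Lemma modz_absn x : (`|((x - 1) %% n%:Z)%Z|%N < n)%N.
Proof.
by rewrite -ltz_nat modz_abs ltz_pmod // ltz_nat.
Qed.

Lemma gpK : cancel (gp p) (gp p^-1).
Proof.
move=> x.
have Hj := modz_absn x.
have hlt := pjf_lt p Hj.
have [e1 e2] := decomp ((x - 1) %/ n%:Z)%Z (t := (pjf p `|((x - 1) %% n%:Z)%Z|%N)%:Z)
  (ltac:(apply/andP; split => //; by rewrite ltz_nat)).
rewrite /gp [X in (X - 1)%R]/= -/(gp p x).
have -> : gp p x - 1 = ((x - 1) %/ n%:Z)%Z * n%:Z + (pjf p `|((x - 1) %% n%:Z)%Z|%N)%:Z.
  by rewrite /gp addrK.
rewrite e1 e2 absz_nat pjfK // modz_abs.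
by rewrite -divz_eq subrK.
Qed.

Lemma gpeq q x i : gp q (x + i * n%:Z) = gp q x + (1 * i) * n%:Z.
Proof.
rewrite /gp mul1r.
have -> : x + i * n%:Z - 1 = i * n%:Z + (x - 1) by ring.
rewrite divzMDl ?n0z // modzMDl; ring.
Qed.

Lemma bp_gp e : 1 <= e -> blockperm_pos p e = gp p e.
Proof.
move=> e1; rewrite /blockperm_pos /gp.
have He : e - 1 = (`|e - 1|%N)%:Z by rewrite gez0_abs // subr_ge0.
rewrite He divz_nat modz_nat absz_nat.
rewrite -/(pjf p _).
by rewrite absz_nat -addn1 !PoszD PoszM.
Qed.
End Block.

Theorem mainTheorem2 (n s : nat) (E : {fset int}) :
  (1 <= n)%N -> (1 <= s)%N ->
  E != fset0 ->
  (forall e, e \in E -> 1 <= e <= s%:Z) ->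
  G2_equiv n (revE s E) E /\
  ((n %| s)%N -> forall p : {perm 'I_n}, G2_equiv n (blockpermE p E) E).
Proof.
move=> n1 _ _ HE; split.
  pose r := fun x : int => (s.+1)%:Z - x.
  have rK : cancel r r by move=> x; rewrite /r opprB addrC subrK.
  have req : forall x i, r (x + i * n%:Z) = r x + ((-1) * i) * n%:Z.
    by move=> x i; rewrite /r; ring.
  have := G2_transport rK rK req req (revE s E).
  have -> : r @` revE s E = E by exact: (KK rK rK).
  done.
move=> _ p.
have k1 : cancel (gp p^-1) (gp p) by have := @gpK n p^-1 n1; rewrite invgK.
have k2 : cancel (gp p) (gp p^-1) := @gpK n p n1.
have := G2_transport k1 k2 (@gpeq n n1 _) (@gpeq n n1 _) (blockpermE p E).
have -> : blockpermE p E = gp p @` E.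
  apply: eq_in_imfset => e /HE /andP [e1 _]; exact: bp_gp.
by rewrite (KK k2 k1).
Qed.
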